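(* Let $s\ge 3$ be an integer. Then $$T_s=B_0\cup B_1\cup\cdots\cup B_{\lfloor s/2\rfloor-1},\qquad B_k=\{1+k(s+2),\,2+k(s+2),\,\ldots,\,(k+1)s-1\},$$ and $T_s$ is a graded poset of length $\lfloor s/2\rfloor-1$ whose elements of rank $k$ are exactly those of $B_k$. Moreover, for $1\le k\le\lfloor s/2\rfloor-1$, each element $b\in B_k$ covers exactly the three elements $b-s,\ b-(s+1),\ b-(s+2)$, all of which lie in $B_{k-1}$ (and the elements of $B_0$ are exactly the minimal elements).
   Context: For a positive integer $s$, $T_s=P_{(s,s+1,s+2)}$ denotes the set of positive integers that cannot be written as $k_1s+k_2(s+1)+k_3(s+2)$ with $k_1,k_2,k_3$ nonnegative integers, partially ordered by: $y\ge x$ iff there exist $y=y_0,y_1,\ldots,y_l=x$, all in $T_s$, with $y_i-y_{i+1}\in\{s,s+1,s+2\}$ for all $i$. For a poset, $y$ covers $x$ if $x<y$ and there is no $z$ with $x<z<y$. *)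

(* Defs.v *)
From Stdlib Require Import Arith Lia.

Definition repr (s n : nat) : Prop :=
  exists k1 k2 k3 : nat, n = k1 * s + k2 * (s + 1) + k3 * (s + 2).

Definition inT (s n : nat) : Prop := 0 < n /\ ~ repr s n.

Definition step (s y x : nat) : Prop :=
  y = x + s \/ y = x + (s + 1) \/ y = x + (s + 2).

Inductive geT (s : nat) : nat -> nat -> Prop :=
| geT_refl : forall y, inT s y -> geT s y y
| geT_step : forall y z x, inT s y -> step s y z -> geT s z x -> geT s y x.

Definition gtT (s y x : nat) : Prop := geT s y x /\ y <> x.

Definition coversT (s y x : nat) : Prop :=
  gtT s y x /\ ~ (exists z, gtT s y z /\ gtT s z x).

Definition minimalT (s x : nat) : Prop :=
  inT s x /\ ~ (exists y, gtT s x y).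

Definition graded_with_rank (s : nat) (rho : nat -> nat) : Prop :=
  (forall x, minimalT s x -> rho x = 0) /\
  (forall x y, coversT s y x -> rho y = rho x + 1).

Definition chainT (s l : nat) (f : nat -> nat) : Prop :=
  (forall i, i <= l -> inT s (f i)) /\
  (forall i, i < l -> gtT s (f (S i)) (f i)).

Definition has_length (s L : nat) : Prop :=
  (exists f, chainT s L f) /\ (forall l f, chainT s l f -> l <= L).

Definition inB (s k b : nat) : Prop :=
  1 + k * (s + 2) <= b /\ b <= (k + 1) * s - 1.

(* Main.v *)
Require Import Defs.
From Stdlib Require Import Arith Lia.

Lemma repr_iff s n : repr s n <-> exists m, m*s <= n <= m*(s+2).
Proof.
  split.
  - intros [k1 [k2 [k3 H]]]. exists (k1+k2+k3). subst. nia.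
  - intros [m [H1 H2]].
    destruct (le_lt_dec (n - m*s) m) as [Hr|Hr].
    + exists (m - (n - m*s)), (n - m*s), 0.
      remember (n - m*s) as r. assert (exists a, m = r + a) as [a Ha] by (exists (m-r); lia).
      subst m. nia.
    + exists 0, (2*m - (n - m*s)), (n - m*s - m).
      remember (n - m*s) as r. nia.
Qed.

Lemma inB_div s k b : 1 <= s -> inB s k b -> b / s = k.
Proof.
  intros Hs [H1 H2]. symmetry. apply Nat.div_unique with (r := b - k*s); nia.
Qed.

Lemma inT_char s n : 3 <= s -> (inT s n <-> exists k, k <= s/2 - 1 /\ inB s k n).
Proof.
  intros Hs.
  pose proof (Nat.div_mod_eq s 2) as Hs2.
  pose proof (Nat.mod_upper_bound s 2 ltac:(lia)) as He.
  remember (s/2) as h. remember (s mod 2) as e.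
  split.
  - intros [Hn Hr].
    pose proof (Nat.div_mod_eq n s) as Hn2.
    pose proof (Nat.mod_upper_bound n s ltac:(lia)) as Hn3.
    remember (n / s) as m. remember (n mod s) as r.
    assert (~ (m*s <= n <= m*(s+2))) as Hc by (intro; apply Hr, repr_iff; eauto).
    exists m. unfold inB. nia.
  - intros [k [Hk [H1 H2]]]. split; [lia|].
    intros Hr. apply repr_iff in Hr as [m [Hm1 Hm2]].
    destruct (le_lt_dec m k) as [Hmk|Hmk].
    + assert (m*(s+2) <= k*(s+2)) by (apply Nat.mul_le_mono_r; lia). lia.
    + assert ((k+1)*s <= m*s) by (apply Nat.mul_le_mono_r; lia). lia.
Qed.

Lemma step_rank s y z : 3 <= s -> inT s y -> inT s z -> step s y z -> z/s + 1 = y/s.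
Proof.
  intros Hs Hy Hz Hst.
  apply (inT_char s y Hs) in Hy as [k [_ Hk]].
  apply (inT_char s z Hs) in Hz as [k' [_ Hk']].
  rewrite (inB_div s k y), (inB_div s k' z) by (auto; lia).
  destruct Hk as [A B], Hk' as [C D].
  destruct (lt_eq_lt_dec (k'+1) k) as [[Hl|Hl]|Hl]; [|lia|].
  - assert ((k'+2)*(s+2) <= k*(s+2)) by (apply Nat.mul_le_mono_r; lia).
    unfold step in Hst. nia.
  - assert (k*(s+2) <= k'*(s+2)) by (apply Nat.mul_le_mono_r; lia).
    assert (k*s <= k'*s) by (apply Nat.mul_le_mono_r; lia).
    unfold step in Hst. nia.
Qed.

Lemma geT_props s y x : 3 <= s -> geT s y x ->
  inT s y /\ inT s x /\ x/s <= y/s /\ (y/s = x/s -> y = x).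
Proof.
  intros Hs H. induction H as [y Hy|y z x Hy Hst H IH].
  - split; [auto|split; [auto|split; [lia|auto]]].
  - destruct IH as [Hz [Hx [Hle _]]].
    pose proof (step_rank s y z Hs Hy Hz Hst). split; [auto|split; [auto|split; [lia|intros; lia]]].
Qed.

Lemma gtT_lt s y x : 3 <= s -> gtT s y x -> x/s < y/s.
Proof.
  intros Hs [H Hne]. destruct (geT_props s y x Hs H) as [_ [_ [A B]]].
  destruct (Nat.eq_dec (y/s) (x/s)); [exfalso; auto|lia].
Qed.

Lemma step_gt s y x : 3 <= s -> inT s y -> inT s x -> step s y x -> gtT s y x.
Proof.
  intros Hs Hy Hx Hst. split.
  - eapply geT_step; eauto. constructor; auto.
  - unfold step in Hst; lia.
Qed.

Lemma covers_step s y x : 3 <= s -> coversT s y x -> step s y x /\ inT s y /\ inT s x.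
Proof.
  intros Hs [[H Hne] Hno]. inversion H; subst.
  - contradiction.
  - destruct (Nat.eq_dec z x) as [->|Hzx].
    + destruct (geT_props s x x Hs H2) as [? _]; auto.
    + exfalso. apply Hno. exists z.
      destruct (geT_props s z x Hs H2) as [Hz _].
      split; [apply step_gt; auto|split; auto].
Qed.

Theorem theorem2p3 (s : nat) (hs : 3 <= s) :
  let L := s / 2 - 1 in
  (forall n, inT s n <-> exists k, k <= L /\ inB s k n) /\
  (exists rho : nat -> nat, graded_with_rank s rho /\
     (forall b k, inT s b -> (rho b = k <-> inB s k b))) /\
  has_length s L /\
  (forall k b, 1 <= k -> k <= L -> inB s k b ->
     (forall x, coversT s b x <-> (x = b - s \/ x = b - (s + 1) \/ x = b - (s + 2))) /\
     inB s (k - 1) (b - s) /\ inB s (k - 1) (b - (s + 1)) /\ inB s (k - 1) (b - (s + 2))) /\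
  (forall x, minimalT s x <-> inB s 0 x).
Proof.
  intros L.
  assert (HC : forall n, inT s n <-> exists k, k <= L /\ inB s k n) by (intro; apply inT_char; auto).
  assert (HD : forall k b d, 1 <= k -> k <= L -> inB s k b -> s <= d <= s+2 ->
            inB s (k-1) (b - d) /\ inT s (b - d) /\ inT s b /\ step s b (b - d)).
  { intros k b d Hk HL Hb Hd.
    assert (inB s (k-1) (b-d)).
    { destruct Hb as [A B]. destruct k as [|k']; [lia|].
      replace (S k' - 1) with k' by lia. unfold inB. nia. }
    split; [auto|split; [apply HC; exists (k-1); split; auto; lia|split]].
    - apply HC; eauto.
    - destruct Hb as [A B]. assert (k*(s+2) >= s+2) by nia.
      unfold step; lia. }
  assert (HM : forall x, minimalT s x <-> inB s 0 x).
  { intro x. split.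
    - intros [Hx Hno]. apply HC in Hx as [k [HL Hk]].
      destruct k as [|k']; auto. exfalso. apply Hno.
      destruct (HD (S k') x s ltac:(lia) HL Hk ltac:(lia)) as [_ [A [B C]]].
      exists (x - s). apply step_gt; auto.
    - intros Hx. split.
      + apply HC. exists 0. split; auto; lia.
      + intros [y [H Hne]]. inversion H; subst; [contradiction|].
        destruct Hx. unfold step in H1. lia. }
  split; [auto|split; [|split; [|split; [|auto]]]].
  - exists (fun b => b / s). split; [split|].
    + intros x Hx. apply HM in Hx. apply (inB_div s 0 x); auto; lia.
    + intros x y Hc. destruct (covers_step s y x hs Hc) as [A [B C]].
      symmetry. apply step_rank; auto.
    + intros b k Hb. apply HC in Hb as [k0 [_ Hk0]].
      rewrite (inB_div s k0 b) by (auto; lia). split.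
      * intros ->; auto.
      * intros Hk. rewrite <- (inB_div s k0 b), <- (inB_div s k b); auto; lia.
  - split.
    + exists (fun i => 1 + i*(s+2)). split.
      * intros i Hi. apply HC. exists i. split; auto.
        pose proof (Nat.div_mod_eq s 2). pose proof (Nat.mod_upper_bound s 2 ltac:(lia)).
        unfold L in *. unfold inB. nia.
      * intros i Hi. apply step_gt; auto.
        -- apply HC. exists (S i). split; auto.
           pose proof (Nat.div_mod_eq s 2). pose proof (Nat.mod_upper_bound s 2 ltac:(lia)).
           unfold L in *. unfold inB. nia.
        -- apply HC. exists i. split; [lia|].
           pose proof (Nat.div_mod_eq s 2). pose proof (Nat.mod_upper_bound s 2 ltac:(lia)).
           unfold L in *. unfold inB. nia.
        -- unfold step. right; right. nia.
    + intros l f [Hin Hgt].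
      assert (Hi : forall i, i <= l -> i <= f i / s).
      { induction i; intros Hi; [lia|].
        pose proof (gtT_lt s _ _ hs (Hgt i ltac:(lia))). specialize (IHi ltac:(lia)). lia. }
      specialize (Hi l (le_n l)).
      destruct (proj1 (HC (f l)) (Hin l (le_n l))) as [k [HL Hk]].
      rewrite (inB_div s k) in Hi by (auto; lia). lia.
  - intros k b Hk HL Hb.
    destruct (HD k b s Hk HL Hb ltac:(lia)) as [B1 [T1 [Tb S1]]].
    destruct (HD k b (s+1) Hk HL Hb ltac:(lia)) as [B2 [T2 [_ S2]]].
    destruct (HD k b (s+2) Hk HL Hb ltac:(lia)) as [B3 [T3 [_ S3]]].
    split; [|auto].
    intros x. split.
    + intros Hc. destruct (covers_step s b x hs Hc) as [Hst _].
      unfold step in Hst. lia.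
    + assert (Hgen : forall x, inT s x -> step s b x -> coversT s b x).
      { intros x0 Hx0 Hst. split; [apply step_gt; auto|].
        intros [z [Hbz Hzx]].
        pose proof (gtT_lt s _ _ hs Hbz). pose proof (gtT_lt s _ _ hs Hzx).
        pose proof (step_rank s b x0 hs Tb Hx0 Hst). lia. }
      intros [->|[->| ->]]; apply Hgen; auto.
Qed.
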